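(* Let $(a_n)$ be a sequence of positive reals with $1/a_n=O(1)$ as $n\to\infty$, and suppose that for some $\varepsilon>0$, $$\sum_{i=1}^{n}a_i=O\!\left(n(\ln n)^{1-\varepsilon}\right).$$ Then, as $n\to\infty$, $$\sum_{i=3}^{n}\frac{\ln\ln i}{\ln^2 i}\, i a_i\sim\frac{\ln\ln n}{\ln^2 n}\sum_{i=3}^{n} i a_i.$$ *)

(* Defs.v *)
From Stdlib Require Import Reals.
From Coquelicot Require Import Coquelicot.
Open Scope R_scope.

Definition sumR (f : nat -> R) (m n : nat) : R :=
  sum_f_R0 (fun k => f (m + k)%nat) (n - m) * (if (m <=? n)%nat then 1 else 0).

Definition bigO_seq (u v : nat -> R) : Prop :=
  exists C : R, exists N : nat, forall n : nat, (N <= n)%nat ->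
    Rabs (u n) <= C * Rabs (v n).

Definition asym_equiv (u v : nat -> R) : Prop :=
  is_lim_seq (fun n => u n / v n) 1.

(* Main.v *)
Require Import Defs.
From Stdlib Require Import Reals Lra Lia ZArith.
From Coquelicot Require Import Coquelicot.
Open Scope R_scope.

Lemma sumR_empty f m n : (n < m)%nat -> sumR f m n = 0.
Proof. intros H. unfold sumR. destruct (Nat.leb_spec m n); [lia|ring]. Qed.

Lemma sumR_one f m : sumR f m m = f m.
Proof. unfold sumR. rewrite Nat.sub_diag, Nat.leb_refl. simpl. rewrite Nat.add_0_r. ring. Qed.

Lemma sumR_S f m n : (m <= S n)%nat -> sumR f m (S n) = sumR f m n + f (S n).
Proof.
  intros H. destruct (Nat.eq_dec m (S n)) as [->|Hne].
  - rewrite sumR_one, sumR_empty by lia. ring.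
  - unfold sumR. replace (S n - m)%nat with (S (n - m)) by lia.
    rewrite tech5. destruct (Nat.leb_spec m (S n)); [|lia].
    destruct (Nat.leb_spec m n); [|lia].
    replace (m + S (n - m))%nat with (S n) by lia. ring.
Qed.

Lemma sumR_ext f g m n : (forall i, (m <= i <= n)%nat -> f i = g i) -> sumR f m n = sumR g m n.
Proof.
  intros H. induction n.
  - destruct (Nat.eq_dec m 0) as [->|]. rewrite !sumR_one; apply H; lia.
    rewrite !sumR_empty by lia; auto.
  - destruct (Nat.le_gt_cases m (S n)).
    + rewrite !sumR_S by lia. rewrite IHn by (intros; apply H; lia). rewrite H by lia; auto.
    + rewrite !sumR_empty by lia; auto.
Qed.

Lemma sumR_le f g m n : (forall i, (m <= i <= n)%nat -> f i <= g i) -> sumR f m n <= sumR g m n.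
Proof.
  intros H. induction n.
  - destruct (Nat.eq_dec m 0) as [->|]. rewrite !sumR_one; apply H; lia.
    rewrite !sumR_empty by lia; lra.
  - destruct (Nat.le_gt_cases m (S n)).
    + rewrite !sumR_S by lia. assert (f (S n) <= g (S n)) by (apply H; lia).
      assert (sumR f m n <= sumR g m n) by (apply IHn; intros; apply H; lia). lra.
    + rewrite !sumR_empty by lia; lra.
Qed.

Lemma sumR_zero m n : sumR (fun _ => 0) m n = 0.
Proof. induction n.
  - destruct (Nat.eq_dec m 0) as [->|]. rewrite !sumR_one; auto. rewrite !sumR_empty by lia; auto.
  - destruct (Nat.le_gt_cases m (S n)).
    + rewrite !sumR_S by lia. rewrite IHn; ring.
    + rewrite !sumR_empty by lia; lra.
Qed.

Lemma sumR_nonneg f m n : (forall i, (m <= i <= n)%nat -> 0 <= f i) -> 0 <= sumR f m n.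
Proof. intros H. rewrite <- (sumR_zero m n). apply sumR_le; auto. Qed.

Lemma sumR_scal c f m n : sumR (fun i => c * f i) m n = c * sumR f m n.
Proof. induction n.
  - destruct (Nat.eq_dec m 0) as [->|]. rewrite !sumR_one; auto. rewrite !sumR_empty by lia; ring.
  - destruct (Nat.le_gt_cases m (S n)).
    + rewrite !sumR_S by lia. rewrite IHn; ring.
    + rewrite !sumR_empty by lia; ring.
Qed.

Lemma sumR_split f m k n : (m <= S k)%nat -> (k <= n)%nat ->
  sumR f m n = sumR f m k + sumR f (S k) n.
Proof.
  intros H1 H2. induction H2.
  - rewrite (sumR_empty f (S k) k) by lia. ring.
  - rewrite !sumR_S by lia. rewrite IHle. ring.
Qed.

Lemma sumR_INR_lb M n : (M <= n)%nat -> 2 * sumR INR M n >= INR n ^ 2 - INR M ^ 2.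
Proof.
  intros H. induction H.
  - rewrite sumR_one. pose proof (pos_INR M). nra.
  - rewrite sumR_S by lia. rewrite S_INR. pose proof (pos_INR m). lra.
Qed.

Lemma ln_lt_id x : 0 < x -> ln x < x.
Proof.
  intros H. destruct (Req_dec (ln x) 0) as [E|E]. rewrite E; lra.
  pose proof (exp_ineq1 _ E). rewrite exp_ln in H0 by lra. lra.
Qed.

Lemma ln_le_sqrt x : 0 < x -> ln x <= 2 * sqrt x.
Proof.
  intros H. pose proof (sqrt_lt_R0 _ H).
  rewrite <- (sqrt_sqrt x) at 1 by lra. rewrite ln_mult by lra.
  pose proof (ln_lt_id _ H0). lra.
Qed.

Lemma ln_ge1 x : 3 <= x -> 1 <= ln x.
Proof. intros H. rewrite <- (ln_exp 1). apply ln_le. apply exp_pos. pose proof exp_le_3; lra. Qed.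

Lemma ln_ge2 x : 9 <= x -> 2 <= ln x.
Proof. intros H. rewrite <- (ln_exp 2). apply ln_le. apply exp_pos.
  replace 2 with (1+1) by ring. rewrite exp_plus. pose proof exp_le_3. pose proof (exp_pos 1). nra. Qed.

Lemma ln_le_sub1 x : 0 < x -> ln x <= x - 1.
Proof.
  intros H. destruct (Req_dec (ln x) 0) as [E2|E2].
  - rewrite <- (exp_ln x) by lra. rewrite E2, exp_0, ln_1. lra.
  - pose proof (exp_ineq1 _ E2). rewrite exp_ln in H0 by lra. lra.
Qed.

Lemma g_decr s t : 2 <= s -> s <= t -> ln t / t^2 <= ln s / s^2.
Proof.
  intros Hs Ht.
  assert (Hr : ln t <= ln s + (t/s - 1)).
  { replace t with (s * (t/s)) at 1 by (field; lra). rewrite ln_mult.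
    pose proof (ln_le_sub1 (t/s)). assert (0 < t/s) by (apply Rdiv_lt_0_compat; lra). lra.
    lra. apply Rdiv_lt_0_compat; lra. }
  assert (Hl2 : / 2 < ln s).
  { pose proof ln_lt_2. pose proof (ln_le 2 s ltac:(lra) Hs). lra. }
  apply Rmult_le_reg_r with (t^2 * s^2). apply Rmult_lt_0_compat; apply pow_lt; lra.
  replace (ln t / t ^ 2 * (t ^ 2 * s ^ 2)) with (ln t * s^2) by (field; lra).
  replace (ln s / s ^ 2 * (t ^ 2 * s ^ 2)) with (ln s * t^2) by (field; lra).
  assert (ln t * s^2 <= ln s * s^2 + (t - s) * s).
  { replace ((t-s)*s) with ((t/s - 1) * s^2) by (field; lra). nra. }
  assert (s <= ln s * (t+s)) by nra.
  assert ((t - s) * s <= ln s * (t - s) * (t + s)).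
  { replace (ln s * (t - s) * (t + s)) with ((t-s) * (ln s * (t+s))) by ring. apply Rmult_le_compat_l; lra. }
  nra.
Qed.

Definition w x := ln (ln x) / (ln x)^2.

Lemma w_decr x y : 9 <= x -> x <= y -> w y <= w x.
Proof. intros. unfold w. apply g_decr. apply ln_ge2; auto. apply ln_le; lra. Qed.

Lemma w_bounds x : 3 <= x -> 0 <= w x <= 1.
Proof.
  intros H. pose proof (ln_ge1 _ H). unfold w. split.
  - apply Rdiv_le_0_compat. rewrite <- ln_1. apply ln_le; lra. nra.
  - pose proof (ln_lt_id (ln x)). apply Rmult_le_reg_r with (ln x ^2). nra.
    field_simplify; nra.
Qed.

Lemma floor_half x : 2 <= x -> exists m : nat, x / 2 <= INR m <= x.
Proof.
  intros H. destruct (archimed x) as [H1 H2].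
  set (z := (up x - 1)%Z).
  assert (Hz : IZR z = IZR (up x) - 1) by (unfold z; rewrite minus_IZR; auto).
  assert (0 <= z)%Z. { apply le_IZR. lra. }
  exists (Z.to_nat z). rewrite INR_IZR_INZ, Z2Nat.id by auto. lra.
Qed.

Lemma sqrt_ge v y : 0 <= v -> v^2 <= y -> v <= sqrt y.
Proof. intros. rewrite <- (sqrt_pow2 v) by auto. apply sqrt_le_1_alt; auto. Qed.

Lemma ln_le_4rt y : 0 < y -> ln y <= 4 * sqrt (sqrt y).
Proof.
  intros H. pose proof (sqrt_lt_R0 _ H).
  rewrite <- (sqrt_sqrt y) at 1 by lra. rewrite ln_mult by lra.
  pose proof (ln_le_sqrt _ H0). lra.
Qed.

Lemma INR_ge k i : (k <= i)%nat -> INR k <= INR i.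
Proof. apply le_INR. Qed.

Lemma INR_ge3 i : (3 <= i)%nat -> 3 <= INR i.
Proof. intros H. apply le_INR in H. simpl in H. lra. Qed.

Lemma INR_ge9 i : (9 <= i)%nat -> 9 <= INR i.
Proof. intros H. apply le_INR in H. simpl in H. lra. Qed.

Theorem lemma2 (a : nat -> R) (eps : R) :
  (forall n : nat, (1 <= n)%nat -> 0 < a n) ->
  bigO_seq (fun n => / a n) (fun _ => 1) ->
  0 < eps ->
  bigO_seq (fun n => sumR a 1 n)
           (fun n => INR n * Rpower (ln (INR n)) (1 - eps)) ->
  asym_equiv
    (fun n => sumR (fun i => ln (ln (INR i)) / (ln (INR i))^2 * INR i * a i) 3 n)
    (fun n => ln (ln (INR n)) / (ln (INR n))^2 * sumR (fun i => INR i * a i) 3 n).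
Proof.
  intros Hpos HO Heps HA.
  destruct HO as [C0 [N0 HC0]].
  assert (HC0' : forall n, (N0 <= n)%nat -> (1 <= n)%nat -> 0 < C0 /\ / C0 <= a n).
  { intros n H1 H2. specialize (HC0 n H1). pose proof (Hpos n H2).
    assert (0 < / a n) by (apply Rinv_0_lt_compat; auto).
    rewrite Rabs_R1, Rmult_1_r, Rabs_right in HC0 by lra.
    split. lra.
    rewrite <- (Rinv_inv (a n)). apply Rinv_le_contravar; auto. }
  assert (HC0pos : 0 < C0) by (apply (HC0' (max N0 1)); lia).
  set (c := / C0). assert (Hc : 0 < c) by (apply Rinv_0_lt_compat; auto).
  set (M := max 9 (max N0 1)).
  assert (HaM : forall i, (M <= i)%nat -> c <= a i) by (intros; apply HC0'; lia).
  destruct HA as [K [N1 HK]].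
  set (b := fun i => INR i * a i).
  assert (Hb0: forall i, (1 <= i)%nat -> 0 <= b i).
  { intros i Hi; unfold b; pose proof (pos_INR i); pose proof (Hpos i Hi); nra. }
  set (Sb := fun n => sumR b 3 n). set (T := fun n => sumR (fun i => w (INR i) * b i) 3 n).
  unfold asym_equiv.
  apply is_lim_seq_ext with (fun n => T n / (w (INR n) * Sb n)).
  { intros n. unfold T, Sb, w, b. f_equal. apply sumR_ext. intros. ring. }
  apply is_lim_seq_Reals. intros δ Hδ.
  set (d := Rmin δ 1).
  assert (Hd : 0 < d <= 1) by (unfold d, Rmin; destruct (Rle_dec δ 1); lra).
  assert (Hdδ : d <= δ) by apply Rmin_l.
  set (eta := d / 8).
  set (S8 := sumR b 3 8).
  assert (HS8 : 0 <= S8) by (apply sumR_nonneg; intros; apply Hb0; lia).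
  assert (HK0 : 0 <= K).
  { specialize (HK (max N1 1) ltac:(lia)).
    assert (0 < INR (max N1 1)) by (apply lt_0_INR; lia).
    assert (0 < Rpower (ln (INR (max N1 1))) (1 - eps)) by (unfold Rpower; apply exp_pos).
    rewrite (Rabs_pos_eq (INR (max N1 1) * _)) in HK by nra.
    pose proof (Rabs_pos (sumR a 1 (max N1 1))).
    cbv beta in HK. set (p := INR (max N1 1) * Rpower (ln (INR (max N1 1))) (1 - eps)) in HK.
    assert (0 < p) by (unfold p; nra).
    destruct (Rle_lt_dec 0 K); auto. assert (K * p < 0) by nra. lra. }
  set (X := 2 * INR (max 9 N1)).
  set (Lbig := Rmax 3 (Rmax (8 * K / (d * c)) ((5*(1+eta)/eta)^2))).
  destruct (INR_unbounded (Rmax (Rmax (INR (2*M)) (4*S8/(c*d)+1)) (Rmax (exp Lbig) ((16*X)^2)))) as [N HN].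
  exists N. intros n Hn.
  assert (Hnr : INR N <= INR n) by (apply le_INR; lia).
  pose proof (Rmax_l (Rmax (INR (2*M)) (4*S8/(c*d)+1)) (Rmax (exp Lbig) ((16*X)^2))) as T1.
  pose proof (Rmax_r (Rmax (INR (2*M)) (4*S8/(c*d)+1)) (Rmax (exp Lbig) ((16*X)^2))) as T2.
  pose proof (Rmax_l (INR (2*M)) (4*S8/(c*d)+1)) as T3.
  pose proof (Rmax_r (INR (2*M)) (4*S8/(c*d)+1)) as T4.
  pose proof (Rmax_l (exp Lbig) ((16*X)^2)) as T5.
  pose proof (Rmax_r (exp Lbig) ((16*X)^2)) as T6.
  assert (H2M : (2*M <= n)%nat) by (apply INR_le; lra).
  set (nr := INR n) in *.
  assert (Hn9 : 9 <= nr) by (apply INR_ge9; lia).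
  assert (HnS8 : 4*S8/(c*d)+1 <= nr) by lra.
  assert (HnL : exp Lbig <= nr) by lra.
  assert (HnX : (16*X)^2 <= nr) by lra.
  clear T1 T2 T3 T4 T5 T6 HN Hnr.
  set (L := ln nr).
  assert (HLb : Lbig <= L) by (rewrite <- (ln_exp Lbig); apply ln_le; auto; apply exp_pos).
  pose proof (Rmax_l 3 (Rmax (8 * K / (d * c)) ((5*(1+eta)/eta)^2))) as T1.
  pose proof (Rmax_r 3 (Rmax (8 * K / (d * c)) ((5*(1+eta)/eta)^2))) as T2.
  pose proof (Rmax_l (8 * K / (d * c)) ((5*(1+eta)/eta)^2)) as T3.
  pose proof (Rmax_r (8 * K / (d * c)) ((5*(1+eta)/eta)^2)) as T4.
  unfold Lbig in HLb.
  assert (HL3 : 3 <= L) by lra.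
  assert (HLK : 8 * K / (d * c) <= L) by lra.
  assert (HLu : (5*(1+eta)/eta)^2 <= L) by lra.
  clear T1 T2 T3 T4.
  set (LL := ln L).
  assert (HLL : 1 <= LL) by (apply ln_ge1; auto).
  set (u := sqrt L).
  assert (Hu : 5*(1+eta)/eta <= u).
  { apply sqrt_ge; auto. apply Rmult_le_pos; [|apply Rlt_le, Rinv_0_lt_compat]; unfold eta; lra. }
  assert (HuL : u * u = L) by (apply sqrt_sqrt; lra).
  assert (Hwn : w nr = LL / L^2) by reflexivity.
  assert (Hwpos : 0 < w nr) by (rewrite Hwn; apply Rdiv_lt_0_compat; nra).
  assert (HSlow : c * nr^2 / 4 <= Sb n).
  { unfold Sb. rewrite (sumR_split b 3 (M-1) n) by lia.
    replace (S (M-1)) with M by lia.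
    assert (0 <= sumR b 3 (M-1)) by (apply sumR_nonneg; intros; apply Hb0; lia).
    assert (sumR (fun i => c * INR i) M n <= sumR b M n).
    { apply sumR_le. intros i Hi. unfold b. pose proof (HaM i ltac:(lia)). pose proof (pos_INR i). nra. }
    rewrite sumR_scal in H0.
    pose proof (sumR_INR_lb M n ltac:(lia)). fold nr in H1.
    assert (0 <= nr^2) by nra.
    assert (2 * INR M <= nr) by (pose proof (le_INR _ _ H2M) as HH; rewrite mult_INR in HH; simpl in HH; unfold nr; lra).
    pose proof (pos_INR M).
    assert (INR M ^ 2 <= nr^2/4).
    { assert (0 <= (nr/2 - INR M) * (nr/2 + INR M)) by (apply Rmult_le_pos; lra). nra. }
    assert (c * (nr^2 / 4) <= c * sumR INR M n) by (apply Rmult_le_compat_l; lra).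
    lra. }
  assert (HSpos : 0 < Sb n).
  { assert (0 < c * nr^2) by (apply Rmult_lt_0_compat; nra). lra. }
  set (Q := w nr * Sb n).
  assert (HQ : 0 < Q) by (unfold Q; apply Rmult_lt_0_compat; auto).
  assert (HTlow : Q - w nr * S8 <= T n).
  { unfold T. rewrite (sumR_split _ 3 8 n) by lia.
    assert (0 <= sumR (fun i => w (INR i) * b i) 3 8).
    { apply sumR_nonneg. intros i Hi. pose proof (w_bounds (INR i) (INR_ge3 i ltac:(lia))).
      pose proof (Hb0 i ltac:(lia)). nra. }
    assert (sumR (fun i => w nr * b i) 9 n <= sumR (fun i => w (INR i) * b i) 9 n).
    { apply sumR_le. intros i Hi. apply Rmult_le_compat_r. apply Hb0; lia.
      apply w_decr. apply INR_ge9; lia. apply le_INR; lia. }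
    rewrite sumR_scal in H0.
    assert (Sb n = S8 + sumR b 9 n) by (unfold Sb, S8; apply sumR_split; lia).
    unfold Q. nra. }
  assert (HlowS8 : w nr * S8 < d * Q).
  { unfold Q. apply Rmult_lt_compat_l with (r := w nr) in HSpos; auto.
    assert (S8 < d * Sb n).
    { assert (c * d * nr / 4 > S8).
      { assert (4 * S8 / (c * d) * (c*d) = 4 * S8) by (field; lra).
        assert (0 < c * d) by nra. nra. }
      nra. }
    nra. }
  set (x := nr / L^2).
  assert (HL2 : 0 < L^2) by nra.
  assert (Hx : x * L^2 = nr) by (unfold x; field; lra).
  assert (HxX : X <= x).
  { set (q := sqrt (sqrt nr)).
    assert (HLq : L <= 4 * q) by (apply ln_le_4rt; lra).
    assert (Hq2 : q * q = sqrt nr) by (apply sqrt_sqrt, sqrt_pos).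
    assert (Hsn : sqrt nr * sqrt nr = nr) by (apply sqrt_sqrt; lra).
    assert (H16 : 16 * X <= sqrt nr).
    { apply sqrt_ge; auto. unfold X. pose proof (pos_INR (max 9 N1)). lra. }
    assert (HX0 : 0 <= X) by (unfold X; pose proof (pos_INR (max 9 N1)); lra).
    assert (L^2 <= 16 * sqrt nr) by nra.
    assert (X * L^2 <= nr) by nra.
    nra. }
  assert (HX18 : 18 <= X).
  { unfold X. assert (9 <= INR (max 9 N1)) by (apply INR_ge9; lia). lra. }
  destruct (floor_half x ltac:(lra)) as [m [Hm1 Hm2]].
  assert (HmN : (max 9 N1 <= m)%nat) by (apply INR_le; unfold X in HxX; lra).
  assert (Hxn : x <= nr).
  { assert (0 <= x * (L^2 - 1)) by (apply Rmult_le_pos; nra). nra. }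
  assert (Hmn : (m <= n)%nat) by (apply INR_le; fold nr; lra).
  set (mr := INR m) in *.
  assert (Hm9 : 9 <= mr) by (apply INR_ge9; lia).
  assert (HmL : mr * L^2 <= nr) by nra.
  assert (HmL' : nr <= 2 * mr * L^2) by nra.
  set (Lm := ln mr).
  assert (HLm2 : 2 <= Lm) by (apply ln_ge2; auto).
  assert (HLmL : Lm <= L) by (apply ln_le; [lra|unfold mr, nr; apply le_INR; auto]).
  assert (Hln2 : ln 2 <= 1) by (pose proof (ln_le_sub1 2); lra).
  assert (HLup : L <= ln 2 + Lm + 2 * LL).
  { assert (L <= ln (2 * mr * L^2)) by (apply ln_le; lra).
    rewrite !ln_mult, ln_pow in H. 2-6: nra. simpl in H. fold Lm LL in H. lra. }
  assert (HLLu : LL <= 2 * u) by (apply ln_le_sqrt; lra).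
  assert (Heta : 0 < eta <= 1/8) by (unfold eta; lra).
  assert (Hv : 5 * (1 + eta) / eta * eta = 5 * (1+eta)) by (field; lra).
  assert (Hv5 : 5 <= 5 * (1 + eta) / eta).
  { destruct (Rle_lt_dec 5 (5 * (1 + eta) / eta)) as [|Hc5]; auto.
    assert (5 * (1 + eta) / eta * eta < 5 * eta) by (apply Rmult_lt_compat_r; lra). lra. }
  assert (Hu1 : 1 <= u) by lra.
  assert (Hetau : 5 * (1 + eta) <= eta * u).
  { rewrite <- Hv. rewrite (Rmult_comm eta u). apply Rmult_le_compat_r; lra. }
  assert (A1 : 5 * (1 + eta) * u <= eta * L).
  { rewrite <- HuL. replace (eta * (u * u)) with ((eta * u) * u) by ring. apply Rmult_le_compat_r; lra. }
  assert (A2 : 0 <= (1 + eta) * (u - 1)) by (apply Rmult_le_pos; lra).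
  assert (A3 : (1 + eta) * (L - 1 - 4 * u) <= (1 + eta) * Lm) by (apply Rmult_le_compat_l; lra).
  assert (HLLm : L <= (1 + eta) * Lm) by lra.
  assert (Hwm : w mr <= (1 + 3*eta) * w nr).
  { rewrite Hwn. unfold w. fold Lm.
    assert (ln Lm <= LL) by (apply ln_le; lra).
    assert (B1 : L * L <= ((1+eta)*Lm) * ((1+eta)*Lm)) by (apply Rmult_le_compat; lra).
    assert (B2 : (1+eta)*(1+eta) <= 1 + 3*eta).
    { assert (eta*eta <= eta*(1/8)) by (apply Rmult_le_compat_l; lra). lra. }
    assert (HLm2' : 0 < Lm^2) by (apply pow_lt; lra).
    assert (B3 : (1+eta)*(1+eta) * Lm^2 <= (1 + 3*eta) * Lm^2) by (apply Rmult_le_compat_r; lra).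
    assert (L^2 <= (1+3*eta) * Lm^2).
    { replace (L^2) with (L*L) by ring. replace (((1+eta)*Lm) * ((1+eta)*Lm)) with ((1+eta)*(1+eta) * Lm^2) in B1 by ring. lra. }
    apply Rmult_le_reg_r with (Lm^2 * L^2). apply Rmult_lt_0_compat; auto.
    replace (ln Lm / Lm ^ 2 * (Lm ^ 2 * L ^ 2)) with (ln Lm * L^2) by (field; lra).
    replace ((1 + 3 * eta) * (LL / L ^ 2) * (Lm ^ 2 * L ^ 2)) with (LL * ((1 + 3 * eta) * Lm ^ 2)) by (field; lra).
    assert (0 <= ln Lm) by (rewrite <- ln_1; apply ln_le; lra).
    apply Rmult_le_compat; auto. apply pow_le; lra. }
  assert (Hpart1 : sumR (fun i => w (INR i) * b i) 3 m <= K * mr^2 * L).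
  { assert (sumR (fun i => w (INR i) * b i) 3 m <= sumR (fun i => mr * a i) 3 m).
    { apply sumR_le. intros i Hi. unfold b. pose proof (w_bounds (INR i) (INR_ge3 i ltac:(lia))).
      pose proof (Hpos i ltac:(lia)). assert (INR i <= mr) by (apply le_INR; lia).
      pose proof (pos_INR i).
      assert (w (INR i) * INR i <= 1 * INR i) by (apply Rmult_le_compat_r; lra).
      replace (w (INR i) * (INR i * a i)) with ((w (INR i) * INR i) * a i) by ring.
      apply Rmult_le_compat_r; lra. }
    rewrite sumR_scal in H.
    assert (sumR a 3 m <= sumR a 1 m).
    { rewrite (sumR_split a 1 2 m) by lia.
      assert (0 <= sumR a 1 2) by (apply sumR_nonneg; intros; apply Rlt_le, Hpos; lia). lra. }
    specialize (HK m ltac:(lia)). cbv beta in HK. fold mr in HK. fold Lm in HK.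
    assert (HRp : Rpower Lm (1 - eps) <= Lm).
    { unfold Rpower. rewrite <- (exp_ln Lm) at 2 by lra.
      assert (0 <= ln Lm) by (rewrite <- ln_1; apply ln_le; lra).
      assert (0 <= eps * ln Lm) by (apply Rmult_le_pos; lra).
      assert (HH4 : (1 - eps) * ln Lm <= ln Lm) by lra.
      destruct (Rle_lt_or_eq_dec _ _ HH4) as [H5|H5].
      apply Rlt_le, exp_increasing; auto. rewrite H5; lra. }
    assert (0 < Rpower Lm (1 - eps)) by (unfold Rpower; apply exp_pos).
    rewrite (Rabs_pos_eq (mr * _)) in HK by (apply Rmult_le_pos; lra).
    pose proof (Rle_abs (sumR a 1 m)).
    assert (sumR a 1 m <= K * (mr * L)).
    { assert (mr * Rpower Lm (1 - eps) <= mr * L) by (apply Rmult_le_compat_l; lra).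
      assert (K * (mr * Rpower Lm (1 - eps)) <= K * (mr * L)) by (apply Rmult_le_compat_l; lra).
      lra. }
    assert (mr * sumR a 3 m <= mr * (K * (mr * L))) by (apply Rmult_le_compat_l; lra).
    replace (K * mr^2 * L) with (mr * (K * (mr * L))) by ring. lra. }
  assert (Hpart2 : sumR (fun i => w (INR i) * b i) (S m) n <= w mr * Sb n).
  { assert (sumR (fun i => w (INR i) * b i) (S m) n <= sumR (fun i => w mr * b i) (S m) n).
    { apply sumR_le. intros i Hi. apply Rmult_le_compat_r. apply Hb0; lia.
      apply w_decr; auto. apply le_INR; lia. }
    rewrite sumR_scal in H.
    assert (Sb n = sumR b 3 m + sumR b (S m) n) by (unfold Sb; apply sumR_split; lia).
    assert (0 <= sumR b 3 m) by (apply sumR_nonneg; intros; apply Hb0; lia).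
    pose proof (w_bounds mr ltac:(lra)).
    assert (w mr * sumR b (S m) n <= w mr * Sb n) by (apply Rmult_le_compat_l; lra). lra. }
  assert (HKm : K * mr^2 * L <= d / 2 * Q).
  { assert (HwL : w nr * L^2 = LL) by (rewrite Hwn; field; lra).
    assert (Hdc : 0 < d * c) by (apply Rmult_lt_0_compat; lra).
    assert (HdcL : 8 * K <= d * c * L).
    { assert (8 * K / (d * c) * (d * c) = 8 * K) by (field; lra).
      assert (8 * K / (d * c) * (d * c) <= L * (d * c)) by (apply Rmult_le_compat_r; lra).
      lra. }
    assert (HL3' : 0 < L^3) by (apply pow_lt; lra).
    assert (H1 : K * mr^2 * L * L^3 <= K * nr^2).
    { replace (K * mr^2 * L * L^3) with (K * ((mr * L^2) * (mr * L^2))) by ring.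
      apply Rmult_le_compat_l; auto. pose proof (pos_INR m). fold mr in H.
      assert (0 <= mr * L^2) by (apply Rmult_le_pos; lra).
      replace (nr^2) with (nr * nr) by ring. apply Rmult_le_compat; lra. }
    assert (H2 : K * nr^2 <= d / 2 * Q * L^3).
    { unfold Q. replace (d / 2 * (w nr * Sb n) * L ^ 3) with (d / 2 * (w nr * L^2) * L * Sb n) by ring.
      rewrite HwL.
      assert (HdL : 0 < d * L) by (apply Rmult_lt_0_compat; lra).
      assert (E1 : d * L / 2 * (c * nr^2/4) <= d * L / 2 * Sb n) by (apply Rmult_le_compat_l; lra).
      assert (E2 : d * L / 2 * (1 * Sb n) <= d * L / 2 * (LL * Sb n)).
      { apply Rmult_le_compat_l. lra. apply Rmult_le_compat_r; lra. }
      assert (Hn2 : 0 <= nr^2) by (apply pow2_ge_0).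
      assert (E3 : 8 * K * nr^2 <= d * c * L * nr^2) by (apply Rmult_le_compat_r; lra).
      assert (F1 : d / 2 * LL * L * Sb n = d * L / 2 * (LL * Sb n)) by field.
      assert (F2 : d * L / 2 * (c * nr ^ 2 / 4) = d * c * L * nr^2 / 8) by field.
      assert (F3 : d * L / 2 * (1 * Sb n) = d * L / 2 * Sb n) by field.
      lra. }
    apply Rmult_le_reg_r with (L^3); auto. lra. }
  assert (HTup : T n <= (1 + 7 * d / 8) * Q).
  { unfold T. rewrite (sumR_split _ 3 m n) by lia.
    assert (HW1 : w mr * Sb n <= (1 + 3*eta) * w nr * Sb n) by (apply Rmult_le_compat_r; lra).
    assert (HW2 : (1 + 3*eta) * w nr * Sb n = (1 + 3*eta) * Q) by (unfold Q; ring).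
    unfold eta in HW1, HW2. lra. }
  unfold R_dist. simpl.
  set (r := T n / Q).
  assert (Hr : r * Q = T n) by (unfold r; field; lra).
  apply Rabs_def1.
  - assert (r < 1 + δ).
    { apply Rmult_lt_reg_r with Q; auto. rewrite Hr.
      assert (0 < (δ - 7*d/8) * Q) by (apply Rmult_lt_0_compat; lra). lra. }
    lra.
  - assert (1 - δ < r).
    { apply Rmult_lt_reg_r with Q; auto. rewrite Hr.
      assert (d * Q <= δ * Q) by (apply Rmult_le_compat_r; lra). lra. }
    lra.
Qed.
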